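(* Let $S$ be a countably compact Hausdorff topological Clifford semigroup which is a strong semilattice of topological groups. The following are equivalent: (1) $S$ is metrizable; (2) $E(S)$ is a $G_\delta$-subset of $S$; (3) for every $e\in E(S)$, the singleton $\{e\}$ is a $G_\delta$-subset of $G_e$.
   Context: A Clifford semigroup is an inverse semigroup (each $x$ has a unique $x^{-1}$ with $xx^{-1}x=x$, $x^{-1}xx^{-1}=x^{-1}$) with $xx^{-1}=x^{-1}x$ for all $x$; topological means multiplication and inversion are continuous. $E(S)$ is the set of idempotents, ordered by $e\le f\iff ef=e$; $G_e:=\{x: xx^{-1}=e\}$; $\varphi_{f,e}\colon G_f\to G_e$, $x\mapsto ex$. $S$ is a strong semilattice of topological groups if the bonding maps are continuous and the topology of $S$ is the disjoint-union topology of the subspaces $G_e$. A $G_\delta$-subset is a countable intersection of open sets. Known fact that may be used (Metrizability of Clifford topological semigroups, Thm 3.4): a countably compact Hausdorff topological Clifford semigroup $S$ is metrizable provided $E(S)$ is a metrizable $G_\delta$-subset of $S$. *)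

(* Defs.v *)
From HB Require Import structures.
From Stdlib Require Import Rdefinitions Raxioms.
From mathcomp Require Import all_boot all_order all_algebra.
From mathcomp Require Import all_classical all_reals topology borel_hierarchy.
Set Implicit Arguments. Unset Strict Implicit. Unset Printing Implicit Defensive.
Local Open Scope classical_set_scope.

Section Clifford.
Context {S : topologicalType} (mul : S -> S -> S) (inv : S -> S).

Definition inverse_semigroup : Prop :=
  (forall x y z, mul x (mul y z) = mul (mul x y) z) /\
  (forall x, mul (mul x (inv x)) x = x /\ mul (mul (inv x) x) (inv x) = inv x) /\
  (forall x y, mul (mul x y) x = x -> mul (mul y x) y = y -> y = inv x).

Definition clifford_semigroup : Prop :=
  inverse_semigroup /\ forall x, mul x (inv x) = mul (inv x) x.

Definition topological_clifford_semigroup : Prop :=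
  clifford_semigroup /\
  continuous (fun p : S * S => mul p.1 p.2) /\ continuous inv.

Definition idempotents : set S := [set e | mul e e = e].

Definition Gsub (e : S) : set S := [set x | mul x (inv x) = e].

(** Bonding map phi_{f,e} : G_f -> G_e, x |-> e x (for e <= f, i.e. ef = e). *)
Definition bonding (f e : S) : S -> S := fun x => mul e x.

Definition open_in (B A : set S) : Prop :=
  exists U : set S, open U /\ A `&` B = U `&` B.

(** Strong semilattice of topological groups: bonding maps are continuous
    (as maps on the subspace G_f) and the topology of S is the disjoint-union
    topology of the subspaces G_e. *)
Definition strong_semilattice_of_topgroups : Prop :=
  (forall e f, idempotents e -> idempotents f -> mul e f = e ->
     {within Gsub f, continuous (bonding f e)}) /\
  (forall A : set S, open A <-> forall e, idempotents e -> open_in (Gsub e) A).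

End Clifford.

Definition countably_compact (T : topologicalType) : Prop :=
  forall U : nat -> set T, (forall n, open (U n)) ->
    setT `<=` \bigcup_n U n ->
    exists N : nat, setT `<=` \bigcup_(n in [set k | (k < N)%N]) U n.

Definition Gdelta_in (T : topologicalType) (B A : set T) : Prop :=
  exists2 F : nat -> set T, (forall i, open (F i)) & A = B `&` \bigcap_i F i.

Definition is_metric (T : Type) (d : T -> T -> R) : Prop :=
  (forall x y, Rle R0 (d x y)) /\
  (forall x y, d x y = R0 <-> x = y) /\
  (forall x y, d x y = d y x) /\
  (forall x y z, Rle (d x z) (Rplus (d x y) (d y z))).

Definition metrizable (T : topologicalType) : Prop :=
  exists d : T -> T -> R, is_metric d /\
    forall A : set T, open A <->
      (forall x, A x -> exists eps : R, Rlt R0 eps /\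
         [set y | Rlt (d x y) eps] `<=` A).

(* Main.v *)
Require Import Defs.
From HB Require Import structures.
From Stdlib Require Import Rdefinitions Raxioms RIneq Lra Lia.
From Stdlib Require Rtrigo_def.
From mathcomp Require Import all_boot all_order all_algebra.
From mathcomp Require Import all_classical all_reals topology borel_hierarchy.
From mathcomp Require Import normedtype Rstruct Rstruct_topology.
Set Implicit Arguments. Unset Strict Implicit. Unset Printing Implicit Defensive.
Import Order.TTheory GRing.Theory Num.Theory.
Local Open Scope classical_set_scope.

Section Alg.
Context {S : topologicalType} (mul : S -> S -> S) (inv : S -> S).
Hypothesis HC : clifford_semigroup mul inv.
Local Notation ee x := (mul x (inv x)).

Lemma mulA x y z : mul x (mul y z) = mul (mul x y) z.
Proof. by case: HC => [[A _] _]. Qed.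
Lemma mxix x : mul (mul x (inv x)) x = x.
Proof. by case: HC => [[_ [B _]] _]; case: (B x). Qed.
Lemma ixi x : mul (mul (inv x) x) (inv x) = inv x.
Proof. by case: HC => [[_ [B _]] _]; case: (B x). Qed.
Lemma inv_uniq x y : mul (mul x y) x = x -> mul (mul y x) y = y -> y = inv x.
Proof. by case: HC => [[_ [_ C]] _]; apply: C. Qed.
Lemma cliff x : mul x (inv x) = mul (inv x) x.
Proof. by case: HC. Qed.

Lemma invK x : inv (inv x) = x.
Proof. by apply/esym/inv_uniq; [exact: ixi | exact: mxix]. Qed.
Lemma ee_idem x : idempotents mul (ee x).
Proof. by rewrite /idempotents /= mulA mxix. Qed.
Lemma idem_inv e : idempotents mul e -> inv e = e.
Proof. by rewrite /idempotents /= => h; apply/esym/inv_uniq; rewrite !h. Qed.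
Lemma idem_ee e : idempotents mul e -> ee e = e.
Proof. by move=> h; rewrite idem_inv. Qed.

Lemma G_ee x : Gsub mul inv (ee x) x.
Proof. by []. Qed.
Lemma G_mull e x : Gsub mul inv e x -> mul e x = x.
Proof. by rewrite /Gsub /= => <-; exact: mxix. Qed.
Lemma G_mulr e x : Gsub mul inv e x -> mul x e = x.
Proof. by rewrite /Gsub /= => <-; rewrite cliff mulA mxix. Qed.
Lemma G_ivl e x : Gsub mul inv e x -> mul (inv x) x = e.
Proof. by rewrite /Gsub /= => <-; rewrite cliff. Qed.
Lemma G_inv e x : Gsub mul inv e x -> Gsub mul inv e (inv x).
Proof. by rewrite /Gsub /= invK => <-; rewrite cliff. Qed.
Lemma G_idem e x : Gsub mul inv e x -> idempotents mul e.
Proof. by rewrite /Gsub /= => <-; exact: ee_idem. Qed.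

Lemma G_mul_inv e x y : Gsub mul inv e x -> Gsub mul inv e y ->
  inv (mul x y) = mul (inv y) (inv x) /\ Gsub mul inv e (mul x y).
Proof.
move=> Gx Gy.
have Gix := G_inv Gx; have Giy := G_inv Gy.
have ab : mul (mul x y) (mul (inv y) (inv x)) = e.
  by rewrite -mulA (mulA y) Gy (G_mull Gix) Gx.
have ba : mul (mul (inv y) (inv x)) (mul x y) = e.
  by rewrite -mulA (mulA (inv x)) (G_ivl Gx) (G_mull Gy) (G_ivl Gy).
have h : mul (inv y) (inv x) = inv (mul x y).
  apply: inv_uniq.
    by rewrite ab mulA (G_mull Gx).
  by rewrite ba mulA (G_mull Giy).
by split; [rewrite h | rewrite /Gsub /= -h ab].
Qed.

Lemma G_unique e f x : Gsub mul inv e x -> Gsub mul inv f x -> e = f.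
Proof. by rewrite /Gsub /= => <- <-. Qed.
Lemma idem_G_eq e y : idempotents mul y -> Gsub mul inv e y -> y = e.
Proof. by move=> Ey; rewrite /Gsub /= idem_inv // Ey. Qed.

Section Top.
Hypothesis HT : topological_clifford_semigroup mul inv.
Hypothesis HSS : strong_semilattice_of_topgroups mul inv.
Hypothesis HCC : countably_compact S.

Let HC' : clifford_semigroup mul inv. Proof. by case: HT. Qed.

Lemma cont_lmul a : continuous (mul a).
Proof.
case: HT => _ [Hm _] y.
apply: (@continuous_comp _ _ _ (fun y => (a, y)) (fun p : S * S => mul p.1 p.2) y).
  by apply: cvg_pair; [exact: cvg_cst | exact: cvg_id].
exact: Hm.
Qed.

Lemma open_lmul a U : open U -> open (mul a @^-1` U).
Proof. by move=> oU; move/continuousP: (@cont_lmul a); apply. Qed.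

Lemma open_inv U : open U -> open (inv @^-1` U).
Proof. by case: HT => _ [_ Hi] oU; move/continuousP: Hi; apply. Qed.

Lemma open_G e : open (Gsub mul inv e).
Proof.
case: HSS => _ H; apply/H => f _.
case: (pselect (e = f)) => [<-|nef].
  by exists setT; split; [exact: openT | rewrite setIid setTI].
exists set0; split; first exact: open0.
rewrite set0I; apply/seteqP; split => x // [Gex Gfx].
by apply: nef; exact: (G_unique Gex Gfx).
Qed.

Lemma cluster_seq (x : nat -> S) : exists z, forall U, open U -> U z ->
  forall m, exists2 k, (m <= k)%N & U (x k).
Proof.
case: (pselect (exists z, forall U, open U -> U z ->
  forall m, exists2 k, (m <= k)%N & U (x k))) => // nz; exfalso.
have hz : forall z, exists U, [/\ open U, U z &
    exists m, forall k, (m <= k)%N -> ~ U (x k)].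
  move=> z; apply: contrapT => h; apply: nz; exists z => U oU Uz m.
  apply: contrapT => h2; apply: h; exists U; split => //; exists m => k mk Uk.
  by apply: h2; exists k.
pose Uc m := \bigcup_(U in [set U | open U /\ forall k, (m <= k)%N -> ~ U (x k)]) U.
have oUc : forall m, open (Uc m).
  by move=> m; apply: bigcup_open => U [].
have cov : setT `<=` \bigcup_n Uc n.
  move=> z _; have [U [oU Uz [m hm]]] := hz z.
  by exists m => //; exists U.
have [N HN] := HCC oUc cov.
have [n /= nN [U [oU hU] UxN]] := HN (x N) I.
exact: (hU N (ltnW nN) UxN).
Qed.


Section Seq.
Variable F : nat -> set S.
Hypothesis oF : forall i, open (F i).
Hypothesis EF : idempotents mul = \bigcap_i F i.
Hypothesis HH : hausdorff_space S.

Local Notation E := (idempotents mul).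

Lemma next_ex (V : set S) (n : nat) : exists V' : set S, open V -> E `<=` V ->
  [/\ open V', E `<=` V', V' `<=` V `&` F n, (forall a, V' a -> V (inv a)) &
      (forall a b, V' a -> V' b -> ee a = ee b -> V (mul a b))].
Proof.
case: (pselect (open V /\ E `<=` V)); last first.
  by move=> h; exists set0 => oV EV; exfalso; exact: h.
move=> [oV EV].
have hO : forall e, exists O : set S, E e -> [/\ open O, O e &
    forall a b, O a -> O b -> V (mul a b)].
  move=> e; case: (pselect (E e)); last by move=> h; exists set0.
  move=> Ee.
  case: HT => _ [Hm _].
  have nV : nbhs (mul (e, e).1 (e, e).2) V.
    by apply: open_nbhs_nbhs; split => //=; rewrite Ee; exact: EV.
  have := Hm (e, e) V nV; rewrite /nbhs /= => -[[A B] /= [nA nB] sub].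
  exists (A `&` B)°; split => //; first exact: open_interior.
    by rewrite /interior /=; apply: filterI.
  move=> a b /interior_subset [Aa _] /interior_subset [_ Bb].
  exact: (sub (a, b)).
have [O hO'] := choice hO.
pose V' := [set a | V a /\ F n a /\ V (inv a) /\ O (ee a) a].
exists V' => _ _; split.
- have -> : V' = V `&` F n `&` inv @^-1` V `&`
      \bigcup_(e in E) (Gsub mul inv e `&` O e).
    apply/seteqP; split => a.
      move=> [Va [Fa [Via Oa]]]; split; [split; [split|]|] => //.
      by exists (ee a); [exact: ee_idem | split].
    move=> [[[Va Fa] Via] [e Ee [Gea Oea]]].
    by rewrite /V' /= Gea.
  apply: openI; first apply: openI; first apply: openI => //.
    exact: open_inv.
  apply: bigcup_open => e Ee; apply: openI; first exact: open_G.
  by case: (hO' e Ee).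
- move=> e Ee; rewrite /V' /=.
  have -> : ee e = e by exact: idem_ee.
  have Fe : F n e by move: Ee; rewrite EF => /(_ n I).
  by rewrite idem_inv //; split; [exact: EV|split; [|split; [exact: EV|case: (hO' e Ee)]]].
- by move=> a [Va [Fa _]].
- by move=> a [_ [_ [Via _]]].
- move=> a b [_ [_ [_ Oa]]] [_ [_ [_ Ob]]] eab.
  have [_ _ h] := hO' (ee a) (ee_idem a).
  by apply: h => //; rewrite eab.
Qed.

Definition nextV V n := projT1 (cid (next_ex V n)).

Fixpoint W n : set S := if n is m.+1 then nextV (W m) m else setT.

Lemma W_base n : open (W n) /\ E `<=` W n.
Proof.
elim: n => [|n [oW EW]] /=; first by split => //; exact: openT.
by have [] := projT2 (cid (next_ex (W n) n)) oW EW.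
Qed.

Lemma W_props n : [/\ W n.+1 `<=` W n `&` F n,
   (forall a, W n.+1 a -> W n (inv a)) &
   (forall a b, W n.+1 a -> W n.+1 b -> ee a = ee b -> W n (mul a b))].
Proof.
have [oW EW] := W_base n.
by have [] := projT2 (cid (next_ex (W n) n)) oW EW.
Qed.

Lemma W_mono m n : (m <= n)%N -> W n `<=` W m.
Proof.
elim: n => [|n IH]; first by rewrite leqn0 => /eqP ->.
rewrite leq_eqVlt => /orP [/eqP -> //|]; rewrite ltnS => /IH h a Wa.
by apply: h; have [h1 _ _] := W_props n; case: (h1 a Wa).
Qed.

Lemma W_open n : open (W n). Proof. by case: (W_base n). Qed.
Lemma W_E n : E `<=` W n. Proof. by case: (W_base n). Qed.

Lemma cluster_e e (x : nat -> S) : E e ->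
  (forall k, Gsub mul inv e (x k) /\ W k (x k)) ->
  forall z, (forall U, open U -> U z -> forall m, exists2 k, (m <= k)%N & U (x k)) ->
  z = e.
Proof.
move=> Ee hx z hz.
have Gz : Gsub mul inv e z.
  have [k _ Gk] := hz _ (open_G (ee z)) (G_ee z) 0%N.
  have [Gek _] := hx k.
  by rewrite /Gsub /= -(G_unique Gk Gek).
have Wz : forall k, W k z.
  move=> k.
  pose U := Gsub mul inv e `&` mul (inv z) @^-1` W k.+2.
  have oU : open U by apply: openI; [exact: open_G | apply: open_lmul; exact: W_open].
  have Uz : U z.
    split => //=; rewrite (G_ivl Gz); exact: (@W_E k.+2 e Ee).
  have [j kj [Gj Wj]] := hz U oU Uz k.+2.
  set a := x j in Gj Wj *.
  set b := mul (inv z) a in Wj.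
  have Wa : W k.+1 a.
    by apply: (W_mono (leqnSn k.+1)); apply: (W_mono kj); case: (hx j).
  have [_ Wi _] := W_props k.+1.
  have Wib : W k.+1 (inv b) by exact: Wi.
  have [ib Gb] := G_mul_inv (G_inv Gz) Gj.
  have Gib := G_inv Gb.
  have [_ _ Wm] := W_props k.
  have := Wm a (inv b) Wa Wib.
  rewrite Gj Gib => /(_ erefl).
  by rewrite /b ib invK mulA Gj (G_mull Gz).
have Ez : E z.
  by rewrite EF => i _; have [h _ _] := W_props i; case: (h z (Wz i.+1)).
exact: idem_G_eq Ez Gz.
Qed.


Lemma W_nbhs e U : E e -> open U -> U e ->
  exists n, forall y, Gsub mul inv e y -> W n y -> U y.
Proof.
move=> Ee oU Ue; apply: contrapT => h.
have hx : forall n, exists y, Gsub mul inv e y /\ W n y /\ ~ U y.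
  move=> n; apply: contrapT => h2; apply: h; exists n => y Gy Wy.
  by apply: contrapT => nU; apply: h2; exists y.
have [x hx'] := choice hx.
have [z hz] := cluster_seq x.
have ze : z = e.
  apply: (cluster_e Ee) hz => k; by case: (hx' k) => [? [? _]].
rewrite ze in hz.
have [k _ Uk] := hz U oU Ue 0%N.
by case: (hx' k) => [_ [_ /(_ Uk)]].
Qed.

Local Open Scope relation_scope.
Definition ent n : set (S * S) :=
  [set p | ee p.1 = ee p.2 /\ W n (mul (inv p.1) p.2)].
Definition ents : set_system (S * S) := [set P | exists n, ent n `<=` P].

Lemma ent_mono m n : (m <= n)%N -> ent n `<=` ent m.
Proof. by move=> mn p [h1 h2]; split => //; exact: W_mono mn _ h2. Qed.

Lemma ents_filter : Filter ents.
Proof.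
split.
- by exists 0%N.
- move=> P Q [m hm] [n hn]; exists (maxn m n) => p hp; split.
    by apply: hm; apply: ent_mono hp; exact: leq_maxl.
  by apply: hn; apply: ent_mono hp; exact: leq_maxr.
- by move=> P Q PQ [n hn]; exists n => p /hn /PQ.
Qed.

Lemma ents_diag A : ents A -> diagonal `<=` A.
Proof.
move=> [n hn] [x y] xy; apply: hn; rewrite /diagonal /= in xy; rewrite -xy; split => //=.
by rewrite -cliff; exact: (@W_E n _ (ee_idem x)).
Qed.

Lemma ent_inv n p : ent n.+1 p -> ent n (p.2, p.1).
Proof.
case: p => x y [/= exy Wn]; split => //=.
have Gx : Gsub mul inv (ee x) x by [].
have Gy : Gsub mul inv (ee x) y by rewrite /Gsub exy.
have [h _] := G_mul_inv (G_inv Gx) Gy.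
have [_ Wi _] := W_props n.
by have := Wi _ Wn; rewrite h invK.
Qed.

Lemma ents_inv A : ents A -> ents A^-1.
Proof. by move=> [n hn]; exists n.+1 => p /ent_inv /hn. Qed.

Lemma ents_split A : ents A -> exists2 B, ents B & B \; B `<=` A.
Proof.
move=> [n hn]; exists (ent n.+1); first by exists n.+1.
case=> x z [y [/= exy W1] [/= eyz W2]]; apply: hn; split; first by rewrite exy.
have Gx : Gsub mul inv (ee x) x by [].
have Gy : Gsub mul inv (ee x) y by rewrite /Gsub exy.
have Gz : Gsub mul inv (ee x) z by rewrite /Gsub exy.
have [_ G1] := G_mul_inv (G_inv Gx) Gy.
have [_ G2] := G_mul_inv (G_inv Gy) Gz.
have [_ _ Wm] := W_props n.
have := Wm _ _ W1 W2; rewrite G1 G2 => /(_ erefl).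
by rewrite -mulA (mulA y) Gy (G_mull Gz).
Qed.


Lemma ents_nbhsE : @nbhs S S = nbhs_ ents.
Proof.
apply/funext => x; apply/seteqP; split => A.
  rewrite nbhsE /= => -[B [oB Bx] BA].
  have Mx : (mul x @^-1` B) (ee x) by rewrite /preimage /= (G_mulr (G_ee x)).
  have [n hn] := W_nbhs (ee_idem x) (open_lmul x oB) Mx.
  exists (ent n); first by exists n.
  move=> y; rewrite /xsection /= in_setE => -[/= exy Wy].
  have Gy : Gsub mul inv (ee x) y by rewrite /Gsub exy.
  have [_ G1] := G_mul_inv (G_inv (G_ee x)) Gy.
  have := hn _ G1 Wy; rewrite /preimage /= mulA (G_mull Gy).
  exact: BA.
move=> [P [n hn] sub]; rewrite nbhsE /=.
exists (Gsub mul inv (ee x) `&` mul (inv x) @^-1` W n).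
  split; first by apply: openI; [exact: open_G | apply: open_lmul; exact: W_open].
  split => //; rewrite /preimage /= (G_ivl (G_ee x)).
  exact: (@W_E n _ (ee_idem x)).
move=> y [Gy Wy]; apply: sub; rewrite /xsection /= in_setE.
by apply: hn; split => //=; rewrite Gy.
Qed.


Definition SU : Type := S.
HB.instance Definition _ := Topological.copy SU S.
HB.instance Definition _ := @Nbhs_isUniform.Build SU ents ents_filter
  ents_diag ents_inv ents_split ents_nbhsE.

Lemma SU_cnt : countable_uniformity SU.
Proof.
apply/countable_uniformityP; exists ent.
  by move=> A [n hn]; exists n.
by move=> n; exists n.
Qed.

Definition SM := @countable_uniform.type SU SU_cnt.
Definition dd (x y : S) : R := fine (@edist R SM (x, y)).


Lemma ed_fin x y : @edist R SM (x, y) \is a fin_num.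
Proof.
rewrite ge0_fin_numE //.
have b := @countable_uniform.countable_uniform_bounded R SU SU_cnt x y.
have h2 : (0 < 2 :> R)%R by [].
have := @edist_fin R SM 2%R (x, y) h2 b.
move/le_lt_trans; apply; exact: ltry.
Qed.

Lemma ddE x y : @edist R SM (x, y) = (dd x y)%:E.
Proof. by rewrite /dd fineK ?ed_fin. Qed.

Lemma dd_metric : is_metric dd.
Proof.
split; [|split; [|split]].
- by move=> x y; apply/RleP; apply: fine_ge0; exact: edist_ge0.
- move=> x y; split => [h|->]; last by rewrite /dd edist_refl.
  have : @edist R SM (x, y) = 0%E by rewrite ddE h.
  move/edist_closeP => c; exact: (@close_eq SM HH x y c).
- by move=> x y; rewrite /dd edist_sym.
- move=> x y z; apply/RleP; rewrite -lee_fin EFinD -!ddE.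
  exact: edist_triangle.
Qed.

Lemma dd_open (A : set S) : open A <->
  (forall x, A x -> exists eps : R, Rlt R0 eps /\ [set y | Rlt (dd x y) eps] `<=` A).
Proof.
rewrite openE; split => [hA x Ax|h x Ax].
  have := hA x Ax; rewrite /interior /= => nA.
  have : @nbhs SM SM x A by [].
  move/(@nbhs_ballP R SM) => [e /= e0 sub]; exists e; split; first exact/RltP.
  move=> y /= /RltP dxy; apply: sub; apply: (@edist_lt_ball R SM e (x, y)).
  by rewrite ddE lte_fin.
have [eps [/RltP e0 sub]] := h x Ax.
rewrite /interior /=.
suff : @nbhs SM SM x A by [].
apply/(@nbhs_ballP R SM); exists (eps / 2)%R => /=; first by rewrite divr_gt0.
move=> y bxy; apply: sub => /=; apply/RltP.
have := @edist_fin R SM (eps / 2)%R (x, y) (divr_gt0 e0 (ltr0Sn _ 1)) bxy.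
rewrite ddE lee_fin => /le_lt_trans; apply.
by rewrite ltr_pdivrMr // ltr_pMr // ltr1n.
Qed.

Lemma metrizable_S : metrizable S.
Proof. by exists dd; split; [exact: dd_metric | exact: dd_open]. Qed.

End Seq.
End Top.
End Alg.

Unset Implicit Arguments.
Theorem proposition4p5 (S : topologicalType) (mul : S -> S -> S) (inv : S -> S) :
  countably_compact S -> hausdorff_space S ->
  topological_clifford_semigroup mul inv ->
  strong_semilattice_of_topgroups mul inv ->
  (metrizable S <-> Gdelta (idempotents mul)) /\
  (Gdelta (idempotents mul) <->
     forall e, idempotents mul e -> Gdelta_in (Gsub mul inv e) [set e]).
Proof.
move=> HCC HH HT HSS.
have HC : clifford_semigroup mul inv by case: HT.
split; split.
- move=> [d [[d0 [dE [dS dT]]] dO]].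
  exists (fun i => \bigcup_(e in idempotents mul)
     (Gsub mul inv e `&` [set y | Rlt (d e y) (/ INR i.+1)])).
    move=> i; set r := Rinv (INR i.+1); clearbody r.
    apply: bigcup_open => e _; apply: openI; first exact: open_G.
    apply/dO => y /= hy; exists (Rminus r (d e y)); split.
      by lra.
    move=> z /= hz; have := dT e y z; by lra.
  apply/seteqP; split.
    move=> e Ee i _; exists e => //; split; first by rewrite /Gsub /= idem_ee.
    change (Rlt (d e e) (Rinv (INR i.+1))); rewrite (proj2 (dE e e) erefl).
    by apply: Rinv_0_lt_compat; apply: lt_0_INR; lia.
  move=> x hx.
  have hd : forall i : nat, Rlt (d (mul x (inv x)) x) (/ INR i.+1).
    move=> i; have [e Ee [Gex dex]] := hx i I.
    by rewrite -(G_unique Gex (G_ee mul inv x)).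
  have dz : d (mul x (inv x)) x = R0.
    case: (Rle_lt_or_eq_dec _ _ (d0 (mul x (inv x)) x)) => // dpos.
    have [N [hN /ssrnat.ltP N0]] := Rtrigo_def.archimed_cor1 _ dpos.
    have := hd N.-1; rewrite prednK //; by lra.
  rewrite -(proj1 (dE _ _) dz); exact: ee_idem.
- move=> [F oF EF]; exact: (metrizable_S HC HT HSS HCC oF EF HH).
- move=> [F oF EF] e Ee; exists F => //.
  apply/seteqP; split => y.
    by move=> -> ; split; [rewrite /Gsub /= idem_ee | rewrite -EF].
  by move=> [Gy Fy] /=; apply: (idem_G_eq HC) Gy; rewrite EF.
- move=> h.
  have hF : forall e, exists F : nat -> set S, idempotents mul e ->
      (forall i, open (F i)) /\ [set e] = Gsub mul inv e `&` \bigcap_i F i.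
    move=> e; case: (pselect (idempotents mul e)) => [Ee|nE]; last by exists (fun _ => set0).
    by have [F oF eF] := h e Ee; exists F.
  have [Fe hFe] := choice hF.
  exists (fun i => \bigcup_(e in idempotents mul) (Gsub mul inv e `&` Fe e i)).
    move=> i; apply: bigcup_open => e Ee; apply: openI; first exact: open_G.
    by case: (hFe e Ee).
  apply/seteqP; split.
    move=> e Ee i _; exists e => //.
    have [_ eq] := hFe e Ee.
    by have : [set e] e by []; rewrite eq => -[? /(_ i I)].
  move=> x hx.
  have Ee := ee_idem HC x.
  have [_ eq] := hFe _ Ee.
  have : [set mul x (inv x)] x.
    rewrite eq; split => // i _.
    have [e Ee' [Gex Fex]] := hx i I.
    by rewrite -(G_unique Gex (G_ee mul inv x)).
  by move=> /= ->.
Qed.
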